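(* Fix integers $d\ge 2$ and $B\ge 2$. There exists a monotone function $\psi:\mathbb{R}\to\mathbb{R}$ such that for every function $f:[0,1]^d\to\mathbb{R}$ (no continuity assumed) there exists a function $g:\mathbb{R}\to\mathbb{R}$ with $$f(x_1,\ldots,x_d)=g\Big(\sum_{p=1}^d B^{-p}\psi(x_p)\Big)\qquad\text{for all }(x_1,\ldots,x_d)\in[0,1]^d.$$ *)

(* Defs.v *)
From mathcomp Require Import all_boot all_order all_algebra.
From mathcomp Require Import reals.
Set Implicit Arguments. Unset Strict Implicit. Unset Printing Implicit Defensive.
Import Order.TTheory GRing.Theory Num.Theory.
Local Open Scope ring_scope.

Definition monotone_fun (R : realType) (psi : R -> R) : Prop :=
  (forall x y : R, x <= y -> psi x <= psi y) \/
  (forall x y : R, x <= y -> psi y <= psi x).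

(* Main.v *)
Require Import Defs.
From mathcomp Require Import all_boot all_order all_algebra.
From mathcomp Require Import boolp classical_sets reals.
From mathcomp Require Import ring lra zify.
Set Implicit Arguments. Unset Strict Implicit.
Lemma uniq_digits (B : nat) : 0 < B -> forall n (b b' : nat -> nat),
  (forall i, b i < B) -> (forall i, b' i < B) ->
  \sum_(j < n) b j * B ^ j = \sum_(j < n) b' j * B ^ j ->
  forall i, i < n -> b i = b' i.
Proof.
move=> B0; elim=> [//|n IH] b b' hb hb'.
rewrite !big_ord_recl /= !expn0 !muln1.
have sh (c : nat -> nat) : \sum_(i < n) c (bump 0 i) * B ^ bump 0 i
    = B * \sum_(i < n) c i.+1 * B ^ i.
  rewrite big_distrr /=; apply: eq_bigr => i _.
  by rewrite /bump /= add1n expnS mulnCA.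
rewrite !sh => e.
have e0 : b 0 = b' 0.
  have hm (c X : nat) : (c + B * X) %% B = c %% B.
    by rewrite -modnDmr modnMr addn0.
  have := congr1 (fun m => m %% B) e; rewrite /= !hm.
  by rewrite !modn_small.
move: e; rewrite e0 => /addnI /eqP; rewrite eqn_pmul2l // => /eqP e.
move=> [|i] //= hi.
exact: (IH (fun j => b j.+1) (fun j => b' j.+1)).
Qed.
Import Order.TTheory GRing.Theory Num.Theory.
Local Open Scope ring_scope.

Section Gen.
Variable R : realType.
Variable E : R.
Hypothesis E2 : 2 <= E.

Definition Spart (u : nat -> R) n := \sum_(k < n) u k * E ^- k.+1.

Lemma E0 : 0 < E. Proof. by apply: lt_le_trans E2. Qed.

Lemma Einv_pos k : 0 < E ^- k. 
Proof. by rewrite invr_gt0 exprn_gt0 // E0. Qed.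

Lemma tail (u : nat -> R) M : (forall k, 0 <= u k <= M) -> forall n j,
  Spart u (n + j) - Spart u n + 2 * M * E ^- (n + j).+1 <= 2 * M * E ^- n.+1.
Proof.
move=> hu n; elim=> [|j IH]; first by rewrite addn0 subrr add0r.
rewrite addnS /Spart big_ord_recr /= -/(Spart u (n + j)) -/(Spart u n).
have h1 : u (n + j)%N * E ^- (n + j).+1 <= M * E ^- (n + j).+1.
  by rewrite ler_wpM2r ?(ltW (Einv_pos _)) //; case/andP: (hu (n+j)%N).
have h2 : 2 * M * E ^- (n + j).+2 <= M * E ^- (n + j).+1.
  have M0 : 0 <= M by case/andP: (hu 0%N) => a b; apply: le_trans b.
  have e1 : 2 * E^-1 <= 1 by rewrite ler_pdivrMr ?E0 // mul1r.
  have w0 := ltW (Einv_pos (n + j).+1).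
  have i0 : 0 <= E^-1 by rewrite invr_ge0 ltW ?E0.
  rewrite exprS invfM; have mw := mulr_ge0 M0 w0.
  move: (E^-1) (E^-(n+j).+1) e1 w0 i0 mw => a b ? ? ? ?; nra.
lra.
Qed.

Lemma S_mono (u : nat -> R) M : (forall k, 0 <= u k <= M) -> forall n m,
  (n <= m)%N -> Spart u n <= Spart u m.
Proof.
move=> hu n m /subnKC <-; elim: (m - n)%N => [|j IH]; first by rewrite addn0.
apply: (le_trans IH); rewrite addnS /Spart big_ord_recr /= lerDl.
by apply: mulr_ge0; [case/andP: (hu (n+j)%N)| exact: ltW (Einv_pos _)].
Qed.

Definition Vsup (u : nat -> R) := sup (fun y => exists n, y = Spart u n).

Lemma V_bounds (u : nat -> R) M : (forall k, 0 <= u k <= M) -> forall n,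
  Spart u n <= Vsup u <= Spart u n + 2 * M * E ^- n.+1.
Proof.
move=> hu n.
have ub : forall m, Spart u m <= Spart u n + 2 * M * E ^- n.+1.
  move=> m; case: (leqP n m) => [/subnKC <-|/ltnW lt].
    have := tail hu n (m - n)%N.
    have : 0 <= 2 * M * E ^- (n + (m - n)).+1.
      have M0 : 0 <= M by case/andP: (hu 0%N) => a b; apply: le_trans b.
      by apply: mulr_ge0; [lra| exact: ltW (Einv_pos _)].
    lra.
  have := S_mono hu lt.
  have : 0 <= 2 * M * E ^- n.+1.
    have M0 : 0 <= M by case/andP: (hu 0%N) => a b; apply: le_trans b.
    by apply: mulr_ge0; [lra| exact: ltW (Einv_pos _)].
  lra.
have hs : has_sup (fun y => exists n, y = Spart u n).
  split; first by exists (Spart u 0); exists 0%N.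
  by exists (Spart u n + 2 * M * E ^- n.+1) => y [m ->].
apply/andP; split; first by apply: sup_upper_bound => //; exists n.
by apply: ge_sup; [case: hs | move=> y [m ->]].
Qed.

Lemma cmp (u u' : nat -> R) M dl X X' k :
  0 <= M -> 2 * M < dl * E ->
  (forall n, Spart u n <= X <= Spart u n + 2 * M * E ^- n.+1) ->
  (forall n, Spart u' n <= X') ->
  (forall j, (j < k)%N -> u j = u' j) -> u k + dl <= u' k -> X < X'.
Proof.
move=> M0 hd hX hX' heq hk.
have eqS : Spart u k = Spart u' k.
  by apply: eq_bigr => i _; rewrite heq.
have /andP[_ h1] := hX k.+1.
have h2 := hX' k.+1.
move: h1 h2; rewrite /Spart !big_ord_recr /= -/(Spart u k) -/(Spart u' k) eqS.
have w0 := Einv_pos k.+1.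
have i0 : 0 < E^-1 by rewrite invr_gt0 E0.
have h3 : 2 * M * E^-1 < dl.
  by rewrite ltr_pdivrMr ?E0.
rewrite [E ^+ k.+2]exprS invfM.
move: (E^-1) (E^-k.+1) w0 i0 h3 => a b b0 a0 h3 h1 h2.
have p1 : 0 < (dl - 2 * M * a) * b by apply: mulr_gt0 => //; lra.
have p2 : 0 <= (u' k - u k - dl) * b by apply: mulr_ge0; lra.
rewrite !mulrBl in p1 p2. lra.
Qed.
End Gen.
Section Bits.
Variable R : realType.

Definition bit (z : R) k : bool :=
  Num.floor (2 ^+ k.+1 * z) != 2 * Num.floor (2 ^+ k * z).

Lemma bitE z k : Num.floor (2 ^+ k.+1 * z) = 2 * Num.floor (2 ^+ k * z) + (bit z k : nat)%:Z.
Proof.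
set n := Num.floor (2 ^+ k * z).
have /andP[h1 h2] := floor_itv (2 ^+ k * z); rewrite -/n in h1 h2.
have l1 : 2 * n <= Num.floor (2 ^+ k.+1 * z).
  by rewrite floor_ge_int rmorphM /= exprS -mulrA; lra.
have l2 : Num.floor (2 ^+ k.+1 * z) < 2 * n + 2.
  rewrite floor_lt_int rmorphD rmorphM /= exprS -mulrA.
  by rewrite rmorphD /= in h2; lra.
rewrite /bit -/n; case: eqP => [->|ne] /=; first by rewrite addr0.
clear h1 h2; clearbody n; move: (Num.floor (2 ^+ k.+1 * z)) l1 l2 ne => m; lia.
Qed.

Lemma floor01 (z : R) : 0 <= z < 1 -> Num.floor z = 0.
Proof. by move=> h; apply: floor_def; rewrite add0r. Qed.

Lemma lex (z w : R) : 0 <= z -> w < 1 -> z < w ->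
  exists k, (forall j, (j < k)%N -> bit z j = bit w j) /\ bit z k = false /\ bit w k = true.
Proof.
move=> z0 w1 zw.
have ex : exists n, Num.floor (2 ^+ n * z) < Num.floor (2 ^+ n * w).
  set N := (Num.truncn ((w - z)^-1)).+1.
  have hN : (w - z)^-1 < N%:R by apply: truncnS_gt.
  have h2 : (N%:R : R) <= 2 ^+ N.
    by rewrite -natrX ler_nat ltnW // ltn_expl.
  have wz : 0 < w - z by lra.
  have h3 : 1 < N%:R * (w - z).
    by rewrite -ltr_pdivrMr // mul1r.
  have h4 : 1 <= 2 ^+ N * (w - z).
    apply: ltW; apply: lt_le_trans h3 _; rewrite ler_pM2r //.
  exists N; rewrite -lezD1 floor_ge_int rmorphD /=.
  have := floor_le (2 ^+ N * z); lra.
pose P k := Num.floor (2 ^+ k * z) < Num.floor (2 ^+ k * w).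
have exP : exists k, P k by [].
case: (ex_minnP exP) => k hk hmin.
have mono i : Num.floor (2 ^+ i * z) <= Num.floor (2 ^+ i * w).
  by apply: le_floor; rewrite ler_pM2l ?exprn_gt0 // ltW.
have eqf i : (i < k)%N -> Num.floor (2 ^+ i * z) = Num.floor (2 ^+ i * w).
  move=> ik; apply/eqP; rewrite eq_le mono /=; rewrite leNgt; apply/negP => Pi.
  by have := hmin i Pi; rewrite leqNgt ik.
case: k hk hmin eqf => [|j] hk hmin eqf.
  by move: hk; rewrite /P expr0 !mul1r !floor01 ?ltxx //; lra.
exists j; have Ej := eqf j (ltnSn j).
split.
  move=> i ij; have e1 := eqf i (ltn_trans ij (ltnSn _)).
  have e2 := eqf i.+1 ij.
  move: e2; rewrite !bitE e1 => /addrI [].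
  by case: (bit z i); case: (bit w i).
move: hk; rewrite /P !bitE Ej ltrD2l.
by case: (bit z j); case: (bit w j).
Qed.
End Bits.
Section Main.
Variable R : realType.
Variables d B : nat.
Hypothesis hd : (2 <= d)%N.
Hypothesis hB : (2 <= B)%N.

Definition Er : R := (4 * d * B ^ d)%:R.

Lemma Er4 : 4 <= Er.
Proof.
rewrite /Er ler_nat.
have h1 : (1 <= d * B ^ d)%N by rewrite muln_gt0 expn_gt0; lia.
nia.
Qed.

Lemma Er2 : 2 <= Er. Proof. by have := Er4; lra. Qed.

Definition zz (t : R) : R := if t < 0 then 0 else if 1 < t then 1/2 else t / 2.
Definition bz (z : R) k : R := (bit z k : nat)%:R.
Definition Psi z := Vsup Er (bz z).
Definition psi t := Psi (zz t).

Lemma bz01 z k : 0 <= bz z k <= 1.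
Proof. by rewrite /bz; case: (bit z k); rewrite /= ?ler01 ?lexx. Qed.

Lemma Psi_lt z w : 0 <= z -> w < 1 -> z < w -> Psi z < Psi w.
Proof.
move=> z0 w1 zw; have [k [hj [hz hw]]] := lex z0 w1 zw.
apply: (cmp Er2 (u := bz z) (u' := bz w) (X := Psi z) (X' := Psi w) (M := 1) (dl := 1) (k := k)) => //.
- by have := Er4; lra.
- by move=> n; exact: (V_bounds Er2 (bz01 z) n).
- by move=> n; case/andP: (V_bounds Er2 (bz01 w) n).
- by move=> j jk; rewrite /bz hj.
- by rewrite /bz hz hw /= mulr0n add0r.
Qed.

Lemma zz_rng t : 0 <= zz t < 1.
Proof. rewrite /zz; case: ifP => h1; first by lra. case: ifP => h2; lra. Qed.

Lemma zz_mono t s : t <= s -> zz t <= zz s.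
Proof.
rewrite /zz => ts; case: ifP => h1; case: ifP => h2; try lra;
 case: ifP => h3; try lra; try case: ifP => h4; lra.
Qed.

Lemma zz_cube t : 0 <= t <= 1 -> zz t = t / 2.
Proof. by rewrite /zz => /andP[a b]; rewrite ltNge a /= ltNge b. Qed.

Lemma psi_mono : monotone_fun psi.
Proof.
left=> t s ts; rewrite /psi.
have := zz_mono ts; rewrite le_eqVlt => /orP[/eqP ->//|lt].
apply: ltW; apply: Psi_lt => //; [by case/andP: (zz_rng t) | by case/andP: (zz_rng s)].
Qed.

Definition i0 : 'I_d := Ordinal (leq_trans (isT : (0 < 2)%N) hd).
Definition cube (x : 'I_d -> R) := forall i, 0 <= x i <= 1.
Definition Phi (x : 'I_d -> R) := \sum_(i < d) (B%:R) ^- i.+1 * psi (x i).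
Definition Dk (x : 'I_d -> R) k := \sum_(i < d) (B%:R) ^- i.+1 * bz (zz (x i)) k.
Definition Xn (x : 'I_d -> R) (i : nat) : R := x (insubd i0 i).
Definition Nk (x : 'I_d -> R) k : nat :=
  \sum_(j < d) (bit (zz (Xn x (d - j.+1))) k : nat) * B ^ j.

Lemma Bpos : 0 < (B%:R : R).
Proof. by rewrite ltr0n; lia. Qed.

Lemma Binv i : 0 <= (B%:R : R) ^- i <= 1.
Proof.
have B1 : 1 <= (B%:R : R) by rewrite ler1n; lia.
apply/andP; split; first by rewrite invr_ge0 exprn_ge0 // ltW ?Bpos.
by rewrite invf_le1 ?exprn_gt0 ?Bpos // exprn_ege1.
Qed.

Lemma Dk_rng x k : 0 <= Dk x k <= d%:R.
Proof.
apply/andP; split.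
  apply: sumr_ge0 => i _; apply: mulr_ge0; first by case/andP: (Binv i.+1).
  by case/andP: (bz01 (zz (x i)) k).
have -> : (d%:R : R) = \sum_(i < d) 1 by rewrite sumr_const card_ord.
apply: ler_sum => i _.
have /andP[a b] := Binv i.+1; have /andP[c e] := bz01 (zz (x i)) k.
move: (B%:R ^- i.+1) (bz (zz (x i)) k) a b c e => p q ? ? ? ?; nra.
Qed.

Lemma S_Dk x n : Spart Er (Dk x) n = \sum_(i < d) (B%:R) ^- i.+1 * Spart Er (bz (zz (x i))) n.
Proof.
rewrite /Spart /Dk; under eq_bigr do rewrite mulr_suml.
rewrite exchange_big /=; apply: eq_bigr => i _; rewrite mulr_sumr.
by apply: eq_bigr => k _; rewrite mulrA.
Qed.

Lemma Phi_bounds x n :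
  Spart Er (Dk x) n <= Phi x <= Spart Er (Dk x) n + 2 * d%:R / Er ^+ n.+1.
Proof.
rewrite S_Dk /Phi /psi; apply/andP; split.
  apply: ler_sum => i _; rewrite ler_wpM2l //; first by case/andP: (Binv i.+1).
  by case/andP: (V_bounds Er2 (bz01 (zz (x i))) n).
have -> : 2 * d%:R / Er ^+ n.+1 = \sum_(i < d) (2 / Er ^+ n.+1).
  by rewrite sumr_const card_ord -(mulr_natr (2 / Er ^+ n.+1)) mulrAC.
rewrite -big_split /=; apply: ler_sum => i _.
have /andP[a b] := Binv i.+1.
have /andP[c e] := V_bounds Er2 (bz01 (zz (x i))) n.
have f : 0 <= 2 / Er ^+ n.+1.
  by apply: divr_ge0 => //; rewrite exprn_ge0 // (le_trans _ Er2).
rewrite mulr1 in e.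
rewrite /Psi; move: (B%:R ^- i.+1) (Vsup Er (bz (zz (x i)))) (Spart Er (bz (zz (x i))) n) (2 / Er ^+ n.+1) a b c e f
  => p P s t ? ? ? ? ?.
have h1 : 0 <= p * (s + t - P) by apply: mulr_ge0; lra.
have h2 : 0 <= (1 - p) * t by apply: mulr_ge0; lra.
rewrite mulrBr mulrDr in h1; rewrite mulrBl mul1r in h2. lra.
Qed.

Lemma Dk_N x k : Dk x k = (Nk x k)%:R / B%:R ^+ d.
Proof.
rewrite /Dk /Nk natr_sum mulr_suml.
rewrite (eq_bigr (fun i : 'I_d => B%:R ^- (val i).+1 * bz (zz (Xn x i)) k)); last first.
  by move=> i _; rewrite /Xn valKd.
rewrite -(big_mkord xpredT (fun i => B%:R ^- i.+1 * bz (zz (Xn x i)) k)).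
rewrite big_rev_mkord subn0; apply: eq_bigr => j _.
rewrite natrM natrX /bz.
have -> : (B%:R : R) ^+ d = B%:R ^+ (d - j.+1).+1 * B%:R ^+ j.
  by rewrite -exprD; congr (_ ^+ _); have := ltn_ord j; lia.
have h1 : (B%:R : R) ^+ (d - j.+1).+1 != 0 by rewrite expf_neq0 // gt_eqF ?Bpos.
have h2 : (B%:R : R) ^+ j != 0 by rewrite expf_neq0 // gt_eqF ?Bpos.
by rewrite [LHS]mulrC invfM (mulrC (_^-1)) mulrA mulfK.
Qed.

Lemma Phi_lt x y k : (forall j, (j < k)%N -> Nk x j = Nk y j) ->
  (Nk x k < Nk y k)%N -> Phi x < Phi y.
Proof.
move=> heq hk.
apply: (cmp Er2 (u := Dk x) (u' := Dk y) (X := Phi x) (X' := Phi y)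
  (M := d%:R) (dl := (B%:R ^+ d)^-1) (k := k)).
- by rewrite ler0n.
- have hB0 : (B%:R : R) ^+ d != 0 by rewrite expf_neq0 // gt_eqF ?Bpos.
  rewrite /Er !natrM natrX [X in _ < X]mulrC mulfK //.
  have : (0 : R) < d%:R by rewrite ltr0n; lia.
  lra.
- by move=> n; apply: Phi_bounds.
- by move=> n; case/andP: (Phi_bounds y n).
- by move=> j jk; rewrite !Dk_N heq.
- rewrite !Dk_N -[X in _ + X]mul1r -mulrDl ler_wpM2r //.
    by rewrite invr_ge0 exprn_ge0 // ltW ?Bpos.
  by rewrite natr1 ler_nat.
Qed.

Lemma N_neq x y (i : 'I_d) : cube x -> cube y -> x i < y i ->
  exists k, Nk x k != Nk y k.
Proof.
move=> hx hy lt.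
have z0 : 0 <= zz (x i) by case/andP: (zz_rng (x i)).
have w1 : zz (y i) < 1 by case/andP: (zz_rng (y i)).
have zw : zz (x i) < zz (y i) by rewrite !zz_cube //; lra.
have [k [_ [hz hw]]] := lex z0 w1 zw.
exists k; apply/negP => /eqP e.
have B0 : (0 < B)%N by lia.
have lb (v : 'I_d -> R) j : (bit (zz (Xn v (d - j.+1))) k < B)%N.
  by case: bit => /=; lia.
have := uniq_digits B0 (lb x) (lb y) e (i := (d - i.+1)%N).
have -> : (d - (d - i.+1).+1)%N = i by have := ltn_ord i; lia.
rewrite /Xn valKd hz hw => /(_ _) h.
by have := h (ltac:(have := ltn_ord i; lia)).
Qed.

Lemma Phi_neq x y : (exists k, Nk x k != Nk y k) -> Phi x <> Phi y.
Proof.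
move=> ex.
case: (ex_minnP ex) => m hm hmin.
have heq : forall j, (j < m)%N -> Nk x j = Nk y j.
  move=> j jm; case: (eqVneq (Nk x j) (Nk y j)) => // ne.
  by have := hmin j ne; rewrite leqNgt jm.
case: (ltngtP (Nk x m) (Nk y m)) => [lt|gt|eq].
- by move=> e; have := Phi_lt heq lt; rewrite e ltxx.
- move=> e; have := @Phi_lt y x m (fun j jm => esym (heq j jm)) gt.
  by rewrite e ltxx.
- by move: hm; rewrite eq eqxx.
Qed.

Lemma Phi_inj x y : cube x -> cube y -> Phi x = Phi y -> x = y.
Proof.
move=> hx hy e; apply/funext => i.
case: (ltgtP (x i) (y i)) => // h; exfalso.
- exact: (Phi_neq (N_neq hx hy h) e).
- have [k hk] := N_neq hy hx h.
  by apply: (Phi_neq (ex_intro _ k hk)); rewrite e.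
Qed.
End Main.

Unset Implicit Arguments.
Unset Strict Implicit.

Theorem lemma1 (R : realType) (d B : nat) (hd : (2 <= d)%N) (hB : (2 <= B)%N) :
  exists psi : R -> R, monotone_fun psi /\
    forall f : ('I_d -> R) -> R, exists g : R -> R,
      forall x : 'I_d -> R, (forall i, 0 <= x i <= 1) ->
        f x = g (\sum_(i < d) (B%:R) ^- i.+1 * psi (x i)).
Proof.
exists (@psi R d B); split; first exact: psi_mono.
move=> f.
pose g (t : R) := if pselect (exists x, cube x /\ @Phi R d B x = t) is left h
  then f (projT1 (cid h)) else 0.
exists g => x hx; rewrite /g.
case: pselect => [h|h]; last by exfalso; apply: h; exists x.
case: (cid h) => x' [hx' e] /=.
by rewrite (@Phi_inj R d B hd hB x' x hx' hx e).
Qed.
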